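(* Define subgroups $W_1 \subseteq \dots \subseteq W_p \subseteq W_{p+1} := W_{\mathfrak g}$ by $W_p = \operatorname{Stab}_{W_{\mathfrak g}}(U_p)$ and $W_{i-1} = \operatorname{Stab}_{W_i}(U_{i-1})$ for $i \in \{2,\dots,p\}$. Then $W_i = \operatorname{Stab}_{W_{i+1}}(\mathbf B_i)$ for all $i \in \{1,\dots,p\}$, and $(W_{\mathfrak g}Q) \cap \mathbf B = \mathcal O_Q$, where $\mathcal O_Q$ is the orbit of $Q$ under $W_1$.
   Context: $G$ is a connected complex reductive Lie group, $\mathfrak g = \mathrm{Lie}(G)$, $T\subseteq G$ a maximal torus, $\mathfrak t = \mathrm{Lie}(T)$, $\Phi_{\mathfrak g}$ the root system of $(\mathfrak g,\mathfrak t)$, $W_{\mathfrak g}$ the Weyl group acting on $\mathfrak t$. For $S \subseteq \mathfrak t$ and a subgroup $H \subseteq W_{\mathfrak g}$, $\operatorname{Stab}_H(S) = \{w \in H : w(S)\subseteq S\}$. Fix an integer $p \geq 1$ and $A_1,\dots,A_p \in \mathfrak t$, and let $Q = \sum_{i=1}^p A_i z^{-i}$, identified with $(A_1,\dots,A_p) \in \mathfrak t^p$, on which $W_{\mathfrak g}$ acts diagonally. For $\alpha \in \Phi_{\mathfrak g}$ let $d_\alpha = \max\{i : \alpha(A_i)\neq 0\}$ ($d_\alpha = 0$ if $\alpha(A_i)=0$ for all $i$). For $i \in \{1,\dots,p\}$ let $\Phi_{\mathfrak h_i} = \{\alpha : d_\alpha < i\}$ (the roots of the centraliser of $\{A_i,\dots,A_p\}$),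 $U_i = \bigcap_{\alpha \in \Phi_{\mathfrak h_i}}\ker(\alpha)$ (equal to $\mathfrak t$ if $\Phi_{\mathfrak h_i}$ is empty), and $$\mathbf B_i = \{X \in \mathfrak t : \alpha(X) = 0 \text{ whenever } d_\alpha < i, \ \alpha(X) \neq 0 \text{ whenever } d_\alpha = i\},$$ and $\mathbf B = \mathbf B_1 \times \dots \times \mathbf B_p \subseteq \mathfrak t^p$. *)

(* Defs.v *)
(* Abstract (reduced, crystallographic) root datum over C = R[i],
   R : realType (so C is (isomorphic to) the complex numbers).
   t = 'rV[C]_n (row vectors); a root / linear form alpha on t is a column vector
   'cV[C]_n with alpha(X) = (X *m alpha) 0 0; Weyl group elements are matrices
   w : 'M[C]_n acting on t by X |-> X *m w. *)
From HB Require Import structures.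
From mathcomp Require Import all_boot all_order all_algebra.
From mathcomp Require Import reals.
From mathcomp Require Import complex.
Set Implicit Arguments. Unset Strict Implicit. Unset Printing Implicit Defensive.
Import Order.TTheory GRing.Theory Num.Theory.
Local Open Scope ring_scope.

Section RootData.
Variables (R : realType) (n : nat).
Notation C := (R[i])%C.

Definition reval (X : 'rV[C]_n) (a : 'cV[C]_n) : C := (X *m a) 0 0.

Definition refl (a : 'cV[C]_n) (av : 'rV[C]_n) : 'M[C]_n := 1%:M - a *m av.

Definition is_root_datum (Phi : seq 'cV[C]_n) (cor : 'cV[C]_n -> 'rV[C]_n) : Prop :=
  (forall a, a \in Phi -> a != 0) /\
  (forall a, a \in Phi -> reval (cor a) a = 2) /\
  (forall a b, a \in Phi -> b \in Phi -> refl a (cor a) *m b \in Phi) /\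
  (forall a b, a \in Phi -> b \in Phi ->
     cor (refl a (cor a) *m b) = cor b *m refl a (cor a)) /\
  (forall a b, a \in Phi -> b \in Phi -> exists z : int, reval (cor a) b = z%:~R) /\
  (forall a (c : C), a \in Phi -> c *: a \in Phi -> c = 1 \/ c = -1).

Inductive weyl (Phi : seq 'cV[C]_n) (cor : 'cV[C]_n -> 'rV[C]_n) : 'M[C]_n -> Prop :=
| weyl1 : weyl Phi cor 1%:M
| weylS w a : weyl Phi cor w -> a \in Phi -> weyl Phi cor (w *m refl a (cor a)).

Definition Stab (H : 'M[C]_n -> Prop) (S : 'rV[C]_n -> Prop) : 'M[C]_n -> Prop :=
  fun w => H w /\ forall X, S X -> S (X *m w).

(* Q = sum_{i=1}^p A_i z^-i encoded by A : nat -> 'rV_n, only indices 1..p matter *)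
(* d_alpha = max { i in 1..p : alpha(A_i) <> 0 }, 0 if none *)
Definition dalpha (p : nat) (A : nat -> 'rV[C]_n) (a : 'cV[C]_n) : nat :=
  \max_(1 <= i < p.+1 | reval (A i) a != 0) i.

Definition Uset (Phi : seq 'cV[C]_n) p A (i : nat) : 'rV[C]_n -> Prop :=
  fun X => forall a, a \in Phi -> (dalpha p A a < i)%N -> reval X a = 0.

Definition Bset (Phi : seq 'cV[C]_n) p A (i : nat) : 'rV[C]_n -> Prop :=
  fun X => (forall a, a \in Phi -> (dalpha p A a < i)%N -> reval X a = 0) /\
           (forall a, a \in Phi -> dalpha p A a = i -> reval X a != 0).

(* Wrec k = W_{p+1-k}: Wrec 0 = W_g, Wrec k.+1 = Stab_{Wrec k}(U_{p-k}) *)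
Fixpoint Wrec Phi cor p A (k : nat) : 'M[C]_n -> Prop :=
  match k with
  | 0 => weyl Phi cor
  | k'.+1 => Stab (Wrec Phi cor p A k') (Uset Phi p A (p - k'))
  end.

Definition Wsub Phi cor p A (i : nat) : 'M[C]_n -> Prop := Wrec Phi cor p A (p.+1 - i).

End RootData.

(* Main.v *)
Require Import Defs.
From HB Require Import structures.
From mathcomp Require Import all_boot all_order all_algebra.
From mathcomp Require Import reals complex.
From mathcomp Require Import zify.
Import Order.TTheory GRing.Theory Num.Theory.
Local Open Scope ring_scope.
Set Implicit Arguments. Unset Strict Implicit. Unset Printing Implicit Defensive.

Section Aux.
Variables (R : realType) (n : nat).
Notation C := (R[i])%C.
Implicit Types (X Y : 'rV[C]_n) (a b : 'cV[C]_n) (w : 'M[C]_n).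

Lemma revalM X w a : reval (X *m w) a = reval X (w *m a).
Proof. by rewrite /reval mulmxA. Qed.

Lemma revalD X Y a : reval (X + Y) a = reval X a + reval Y a.
Proof. by rewrite /reval mulmxDl mxE. Qed.

Lemma revalB X Y a : reval (X - Y) a = reval X a - reval Y a.
Proof. by rewrite /reval mulmxBl !mxE. Qed.

Lemma revalZ (c : C) X a : reval (c *: X) a = c * reval X a.
Proof. by rewrite /reval -scalemxAl mxE. Qed.

Lemma refl_invol a (av : 'rV[C]_n) : reval av a = 2 -> refl a av *m refl a av = 1%:M.
Proof.
move=> h; rewrite /refl mulmxBl mul1mx mulmxBr mulmx1.
have -> : a *m av *m (a *m av) = a *m (av *m a) *m av by rewrite !mulmxA.
rewrite [av *m a]mx11_scalar -[(av *m a) 0 0]/(reval av a) h mul_mx_scalar -scalemxAl scaler_nat.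
set M := a *m av.
have E : forall (V : zmodType) (x y : V), x - y - (y - (y + y)) = x.
  by move=> V x y; rewrite (opprD y y) addrA subrr add0r opprK subrK.
by rewrite mulr2n E.
Qed.

Variables (Phi : seq 'cV[C]_n) (cor : 'cV[C]_n -> 'rV[C]_n).
Hypothesis RD : is_root_datum Phi cor.

Lemma weyl_unit w : weyl Phi cor w -> w \in unitmx.
Proof.
elim=> [|w' a _ IH aP]; first exact: unitmx1.
rewrite unitmx_mul IH /=.
have [_ [h _]] := RD.
by case: (mulmx1_unit (refl_invol (h a aP))).
Qed.

Lemma weyl_root w a : weyl Phi cor w -> a \in Phi -> w *m a \in Phi.
Proof.
move=> W; elim: W a => [|w' b _ IH bP] a aP; first by rewrite mul1mx.
rewrite -mulmxA; apply: IH.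
by have [_ [_ [h _]]] := RD; apply: h.
Qed.

Variables (p : nat) (A : nat -> 'rV[C]_n).
Notation d := (dalpha p A).
Notation U := (Uset Phi p A).
Notation B := (Bset Phi p A).
Definition stabU j w := forall X, U j X -> U j (X *m w).

Lemma L1 k a : (1 <= k <= p)%N -> reval (A k) a != 0 -> (k <= d a)%N.
Proof.
move=> kP nz; rewrite /dalpha.
by apply: (@leq_bigmax_seq _ _ _ id k) => //; rewrite mem_index_iota ltnS.
Qed.

Lemma L2 j a : (1 <= j)%N -> (forall k, (j <= k <= p)%N -> reval (A k) a = 0) -> (d a < j)%N.
Proof.
move=> j1 h; rewrite /dalpha -(prednK j1) ltnS.
apply/bigmax_leqP_seq => k; rewrite mem_index_iota ltnS => /andP[k1 kp] nz.
rewrite -ltnS prednK //; rewrite ltnNge; apply/negP => jk.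
by move: nz; rewrite h ?eqxx // jk.
Qed.

Lemma L3 a : (d a <= p)%N.
Proof.
by apply/bigmax_leqP_seq => k; rewrite mem_index_iota ltnS => /andP[].
Qed.

Lemma WrecP k w : Wrec Phi cor p A k w <-> weyl Phi cor w /\ forall m, (m < k)%N -> stabU (p - m) w.
Proof.
elim: k w => [|k IH] w /=; first by split=> [h|[]//]; split.
split.
  case=> /IH [W h] s; split=> // m; rewrite ltnS leq_eqVlt => /orP[/eqP->|/h//].
  exact: s.
case=> W h; split; first by apply/IH; split=> // m mk; apply: h; exact: ltnW.
exact: h.
Qed.

Lemma WsubP i w : Wsub Phi cor p A i w <-> weyl Phi cor w /\ forall j, (i <= j <= p)%N -> stabU j w.
Proof.
rewrite /Wsub WrecP; split=> -[W h]; split=> //.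
  move=> j /andP[ij jp]; have -> : j = (p - (p - j))%N by rewrite subKn.
  by apply: h; lia.
move=> m mk; apply: h; lia.
Qed.

Lemma AinU j k : (1 <= k)%N -> (j <= k <= p)%N -> U j (A k).
Proof.
move=> k1 /andP[jk kp] a aP da; apply/eqP; apply: contraT => nz.
have := L1 (k := k) (a := a); rewrite k1 kp => /(_ isT nz) kd; lia.
Qed.

Lemma AinB i : (1 <= i <= p)%N -> B i (A i).
Proof.
move=> /andP[i1 ip]; split; first by apply: (AinU (k := i)); rewrite ?leqnn.
move=> a aP da; apply/negP => /eqP z.
have : (d a < i)%N; last by rewrite da ltnn.
apply: L2 => // k /andP[ik kp]; have [lt|ge] := ltnP i k; last first.
  by have -> : k = i by lia.
apply/eqP; apply: contraT => nz; have := L1 (k := k) (a := a).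
rewrite kp (leq_trans i1 (ltnW lt)) => /(_ isT nz); lia.
Qed.

Lemma fwd j w a : weyl Phi cor w -> stabU j w -> (1 <= j <= p)%N -> a \in Phi ->
  (d a < j)%N -> (d (w *m a) < j)%N.
Proof.
move=> W s /andP[j1 jp] aP da; apply: L2 => // k /andP[jk kp].
rewrite -revalM; apply: (s (A k)) => //; apply: AinU; lia.
Qed.

Lemma bwd j w a : weyl Phi cor w -> stabU j w -> (1 <= j <= p)%N -> a \in Phi ->
  (d (w *m a) < j)%N -> (d a < j)%N.
Proof.
move=> W s jP aP dwa.
set s0 := undup [seq b <- Phi | (d b < j)%N].
have inj : injective (mulmx w : 'cV[C]_n -> 'cV[C]_n) := can_inj (mulKmx (weyl_unit W)).
have U1 : uniq (map (mulmx w) s0) by rewrite (map_inj_uniq inj) undup_uniq.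
have sub : {subset map (mulmx w) s0 <= s0}.
  move=> x /mapP[b]; rewrite mem_undup mem_filter => /andP[db bP] ->.
  by rewrite mem_undup mem_filter (weyl_root W bP) andbT (fwd W s jP bP db).
have sz : (size s0 <= size (map (mulmx w) s0))%N by rewrite size_map.
have [_ eqs] := uniq_min_size U1 sub sz.
have : w *m a \in s0 by rewrite mem_undup mem_filter dwa (weyl_root W aP).
rewrite -eqs => /mapP[b]; rewrite mem_undup mem_filter => /andP[db _] /inj ->.
exact: db.
Qed.

Lemma dinv i w a : weyl Phi cor w -> (1 <= i <= p)%N -> (forall j, (i <= j <= p)%N -> stabU j w) ->
  a \in Phi -> d a = i -> d (w *m a) = i.
Proof.
move=> W /andP[i1 ip] s aP da; apply/eqP; rewrite eqn_leq; apply/andP; split.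
  case: (ltngtP i p) ip => // [lt|->] _; last exact: L3.
  apply: (fwd W (s i.+1 _)) => //; rewrite ?lt ?andbT //; lia.
rewrite leqNgt; apply/negP => /(bwd W (s i _)); rewrite i1 ip leqnn => /(_ isT isT aP).
by rewrite da ltnn.
Qed.

Lemma chooseT i X : exists t : C, forall a, a \in Phi -> reval (A i) a != 0 ->
  reval X a + t * reval (A i) a != 0.
Proof.
set bad := fun a => - reval X a / reval (A i) a.
set s2 := map bad Phi.
set s1 := map (fun k : nat => k%:R : C) (iota 0 (size Phi).+1).
case: (boolP (all (fun x => x \in s2) s1)) => [/allP H | /allPn [x xs1 xn]].
  have U1 : uniq s1.
    rewrite map_inj_uniq ?iota_uniq // => k1 k2 /eqP; rewrite eqr_nat => /eqP//.
  have := uniq_leq_size U1 H; rewrite !size_map size_iota ltnn //.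
exists x => a aP nz; apply/negP => /eqP e; move: xn; apply/negP; rewrite negbK.
have -> : x = bad a.
  rewrite /bad -(mulfK nz x); congr (_ / _); apply/eqP; rewrite -addr_eq0 addrC; exact/eqP.
exact: map_f.
Qed.

Lemma core i w : weyl Phi cor w -> (1 <= i <= p)%N ->
  (forall j, (i < j <= p)%N -> stabU j w) ->
  (stabU i w <-> forall X, B i X -> B i (X *m w)).
Proof.
move=> W iP s; split.
  move=> si X [XU XB]; split; first exact: si.
  move=> a aP da; rewrite revalM; apply: XB; first exact: weyl_root.
  apply: (dinv W iP) => // j /andP[ij jp].
  have [lt|ge] := ltnP i j; first by apply: s; rewrite lt jp.
  by have -> : j = i by lia.
move=> sB X XU.
have [t ht] := chooseT i X.
have XB : B i (X + t *: A i).
  split=> a aP da.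
    by rewrite revalD revalZ (XU a aP da) (proj1 (AinB iP) a aP da) mulr0 addr0.
  rewrite revalD revalZ; apply: ht => //; exact: (proj2 (AinB iP) a aP da).
have [XBU _] := sB _ XB.
have [AU _] := sB _ (AinB iP).
move=> a aP da.
have -> : X *m w = (X + t *: A i) *m w - t *: (A i *m w) by rewrite mulmxDl -scalemxAl addrK.
by rewrite revalB revalZ XBU // AU // mulr0 subr0.
Qed.

Lemma part2fwd w : weyl Phi cor w -> (forall k, (1 <= k <= p)%N -> B k (A k *m w)) ->
  forall j, (1 <= j <= p)%N -> stabU j w.
Proof.
move=> W h j /andP[j1 jp] X XU a aP da; rewrite revalM; apply: XU; first exact: weyl_root.
apply: L2 => // k /andP[jk kp]; rewrite -revalM.
have k1 : (1 <= k <= p)%N by rewrite kp (leq_trans j1 jk).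
by apply: (proj1 (h k k1)) => //; apply: (leq_trans da).
Qed.

End Aux.

Theorem lemma2p7 (R : realType) (n : nat) (Phi : seq 'cV[R[i]]_n)
  (cor : 'cV[R[i]]_n -> 'rV[R[i]]_n) (p : nat) (A : nat -> 'rV[R[i]]_n) :
  is_root_datum Phi cor -> (1 <= p)%N ->
  (forall i, (1 <= i <= p)%N -> forall w,
     Wsub Phi cor p A i w <-> Stab (Wsub Phi cor p A i.+1) (Bset Phi p A i) w) /\
  (forall Y : nat -> 'rV[R[i]]_n,
     ((exists w, weyl Phi cor w /\ forall i, (1 <= i <= p)%N -> Y i = A i *m w) /\
      (forall i, (1 <= i <= p)%N -> Bset Phi p A i (Y i)))
     <-> (exists w, Wsub Phi cor p A 1 w /\ forall i, (1 <= i <= p)%N -> Y i = A i *m w)).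
Proof.
move=> RD p1.
have P1 : forall i, (1 <= i <= p)%N -> forall w,
     Wsub Phi cor p A i w <-> Stab (Wsub Phi cor p A i.+1) (Bset Phi p A i) w.
  move=> i iP w; rewrite /Stab !WsubP; split.
    case=> W s; split.
      by split=> // j /andP[ij jp]; apply: s; rewrite jp ltnW.
    apply/(core RD W iP) => [j /andP[ij jp]|]; apply: s; first by rewrite jp ltnW.
    by rewrite leqnn; case/andP: iP.
  case=> -[W s] sB; split=> // j /andP[ij jp].
  have [lt|ge] := ltnP i j; first by apply: s; rewrite lt jp.
  have -> : j = i by lia.
  by apply/(core RD W iP) => // k /andP[ik kp]; apply: s; rewrite ik kp.
split=> // Y; split.
  case=> -[w [W hY]] hB; exists w; split=> //; apply/WsubP; split=> //.
  apply: (part2fwd RD W) => k kP; rewrite -hY //; exact: hB.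
case=> w [/WsubP [W s] hY]; split; first by exists w.
move=> i iP; rewrite hY //.
have sB : forall X, Bset Phi p A i X -> Bset Phi p A i (X *m w).
  apply/(core RD W iP) => [j /andP[ij jp]|]; apply: s; lia.
exact/sB/AinB.
Qed.
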